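(* Let $0<p\le q\le1$, let $(\mathcal M,d,0)$ be a finite pointed $q$-metric space, $0\in\mathcal N\subset\mathcal M$, $a\in\mathbb R^{\mathcal N\setminus\{0\}}$ and $T\in\mathcal T(\mathcal M)$. Then $T_{d_T}(a)=T_d(a)$ and \[\Big\|\sum_{x\in\mathcal N\setminus\{0\}}a_x\delta(x)\Big\|_{\mathcal F_p(\mathcal N_T)}\ge\Big\|\sum_{x\in\mathcal N\setminus\{0\}}a_x\delta(x)\Big\|_{\mathcal F_p(\mathcal N)}.\] In particular, if $a\in\mathbb R^{\mathcal N\setminus\{0\}}$ and $T\in\mathcal T(\mathcal M)$ satisfy $T_d(a)=1=\|\sum_{x\in\mathcal N\setminus\{0\}}a_x\delta(x)\|_{\mathcal F_p(\mathcal M)}$ and $\mathrm{amen}_p(\mathcal N,\mathcal M)=\|\sum_{x\in\mathcal N\setminus\{0\}}a_x\delta(x)\|_{\mathcal F_p(\mathcal N)}$, then \[\mathrm{amen}_p(\mathcal N,\mathcal M)\le\frac{\|\sum_{x\in\mathcal N\setminus\{0\}}a_x\delta(x)\|_{\mathcal F_p(\mathcal N_T)}}{T_{d_T}(a)}\le\mathrm{amen}_p(\mathcal N_T,\mathcal M_T).\]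
   Context: For $r\in(0,1]$, an $r$-metric space is a set with $d$ such that $d^r$ is a metric (a $q$-metric space is also a $p$-metric space for $p\le q$); pointed means a distinguished point $0$. A $p$-Banach space is a complete vector space with a $p$-norm. $\delta(x)$ is evaluation at $x$ on real functions vanishing at $0$, and $\mathcal F_p$ of a pointed $p$-metric space is the completion of $\mathrm{span}\{\delta(x)\}$ under $\|\sum a_i\delta(x_i)\|=\sup\|\sum a_if(x_i)\|_Y$ over $p$-Banach $Y$ and $1$-Lipschitz $f$ into $Y$ vanishing at $0$. For $0\in\mathcal N\subset\mathcal M$, $L_j$ is the linear map $\delta_{\mathcal N}(x)\mapsto\delta_{\mathcal M}(x)$ and $\mathrm{amen}_p(\mathcal N,\mathcal M)=\|L_j^{-1}\|$ if $L_j$ is an isomorphism onto its range ($+\infty$ otherwise). $\mathcal T(\mathcal M)$ is the set of trees on $\mathcal M$ rooted at $0$; for $x\ne0$, $\mathrm{pred}_T(x)$ is the neighbour of $x$ on the path to $0$, $e_x^T=\{\mathrm{pred}_T(x),x\}$, $V_x^T$ the vertex set of the subtree rooted at $x$. For a metric $\rho$ on $\mathcal M$ and $a$ extended by $0$ to $\mathcal M$, $T_\rho(a)=\big(\sum_{x\in\mathcal M\setminus\{0\}}|(\sum_{y\in V_x^T}a_y)\rho(e_x^T)|^p\big)^{1/p}$. $d_T$ is the $q$-metric on $\mathcal M$ given by $d_T(u,v)=(\sum_{i}d(u_i,u_{i+1})^q)^{1/q}$, where $u=u_1,\dots,u_m=v$ is the path from $u$ to $v$ in $T$; $\mathcal M_T=(\mathcal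 M,d_T,0)$ and $\mathcal N_T=(\mathcal N,d_T,0)$. *)

(* Defs.v *)
From HB Require Import structures.
From mathcomp Require Import all_boot all_order all_algebra.
From mathcomp Require Import boolp classical_sets reals ereal exp.
Set Implicit Arguments. Unset Strict Implicit. Unset Printing Implicit Defensive.
Import Order.TTheory GRing.Theory Num.Theory.
Local Open Scope ring_scope.

Section Defs.
Variable R : realType.

Record pBanach (p : R) := PBanach {
  pB_car : lmodType R;
  pB_norm : pB_car -> R;
  pB_ge0 : forall x, 0 <= pB_norm x;
  pB_eq0 : forall x, pB_norm x = 0 -> x = 0;
  pB_hom : forall (c : R) x, pB_norm (c *: x) = `|c| * pB_norm x;
  pB_ptri : forall x y, pB_norm (x + y) `^ p <= pB_norm x `^ p + pB_norm y `^ p;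
  pB_complete : forall u : nat -> pB_car,
    (forall eps, 0 < eps -> exists n0, forall m n, (n0 <= m)%N -> (n0 <= n)%N ->
        pB_norm (u m - u n) < eps) ->
    exists l, forall eps, 0 < eps -> exists n0, forall n, (n0 <= n)%N ->
        pB_norm (u n - l) < eps }.

Variable M : finType.

Definition is_qmetric (q : R) (d : M -> M -> R) : Prop :=
  [/\ forall x y, 0 <= d x y,
      forall x y, d x y = 0 <-> x = y,
      forall x y, d x y = d y x &
      forall x y w, d x w `^ q <= d x y `^ q + d y w `^ q].

(* Norm of  sum_{x in X} b_x delta(x)  in F_p((X, d, z)): supremum over all
   p-Banach Y and all f : X -> Y, f z = 0, 1-Lipschitz on X. *)
Definition Fnorm (p : R) (X : {set M}) (d : M -> M -> R) (z : M) (b : M -> R) : R :=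
  sup (fun r : R => exists (Y : pBanach p) (f : M -> pB_car Y),
        [/\ f z = 0,
            forall x y, x \in X -> y \in X -> pB_norm (f x - f y) <= d x y &
            r = pB_norm (\sum_(x in X) b x *: f x)]).

(* amen_p(N, M) = || L_j^{-1} || (and +oo if L_j is not an isomorphism onto
   its range), for the pointed space (M, d, z) and 0 = z in N.  Elements of
   F_p(N) are the finite sums sum_{x in N\{z}} b_x delta(x). *)
Definition amen (p : R) (N : {set M}) (d : M -> M -> R) (z : M) : \bar R :=
  ereal_sup (fun r : \bar R => r = 0%E \/ exists b : M -> R,
     (forall x, (x \notin N) || (x == z) -> b x = 0) /\
     Fnorm p N d z b != 0 /\
     r = (if Fnorm p [set: M] d z b == 0 then +oo%E
          else (Fnorm p N d z b / Fnorm p [set: M] d z b)%:E)).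

Definition is_tpath (e : rel M) (u v : M) (s : seq M) : bool :=
  [&& path e u s, last u s == v & uniq (u :: s)].

Definition is_tree (e : rel M) : Prop :=
  [/\ symmetric e, irreflexive e & forall u v, exists! s, is_tpath e u v s].

Definition tree_path (e : rel M) (u v : M) : seq M :=
  u :: xget [::] (fun s => is_tpath e u v s).

(* pred_T(x): neighbour of x on the path to the root z *)
Definition tpred (z : M) (e : rel M) (x : M) : M := nth x (tree_path e x z) 1.

(* y in V_x^T  iff  x lies on the path from y to the root *)
Definition inV (z : M) (e : rel M) (x y : M) : bool := x \in tree_path e y z.

Definition Tsum (p : R) (z : M) (e : rel M) (rho : M -> M -> R) (b : M -> R) : R :=
  (\sum_(x | x != z)
     `| (\sum_(y | inV z e x y) b y) * rho (tpred z e x) x | `^ p) `^ p^-1.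

Definition dT (q : R) (d : M -> M -> R) (e : rel M) (u v : M) : R :=
  let s := tree_path e u v in
  (\sum_(pr <- zip s (behead s)) d pr.1 pr.2 `^ q) `^ q^-1.

Definition ext0 (N : {set M}) (z : M) (a : M -> R) (x : M) : R :=
  if (x \in N) && (x != z) then a x else 0.

End Defs.

(* Main.v *)
Require Import Defs.
From HB Require Import structures.
From mathcomp Require Import all_boot all_order all_algebra.
From mathcomp Require Import boolp classical_sets reals ereal exp.
Import Order.TTheory GRing.Theory Num.Theory.
Local Open Scope ring_scope.
Set Implicit Arguments. Unset Strict Implicit.

Section Tree.
Variable M : finType.
Variable e : rel M.
Hypothesis He : is_tree e.

Lemma tp_def u v : is_tpath e u v (xget [::] (fun s => is_tpath e u v s)).
Proof.
case: He => _ _ /(_ u v) [s [Hs _]]; have := @xgetPex _ [::] (fun s => is_tpath e u v s); apply; by exists s.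
Qed.

Lemma tp_uniq u v s : is_tpath e u v s -> xget [::] (fun s => is_tpath e u v s) = s.
Proof.
move=> Hs; case: He => _ _ /(_ u v) [s0 [_ U]].
by rewrite -(U _ Hs) -(U _ (tp_def u v)).
Qed.

Lemma tree_path_zz z : tree_path e z z = [:: z].
Proof. by rewrite /tree_path (@tp_uniq z z [::]) // /is_tpath /= eqxx. Qed.

Lemma tree_path_cons z y : y != z ->
  tree_path e y z = y :: tree_path e (tpred z e y) z.
Proof.
move=> yz; rewrite /tpred /tree_path.
have := tp_def y z; case E: (xget [::] (fun s => is_tpath e y z s)) => [|w s].
  by rewrite /is_tpath /= (negbTE yz).
rewrite /is_tpath => /and3P[]; rewrite [path _ _ _]/= => /andP[_ Hp] Hl; rewrite [uniq _]/= => /andP[_ Hu].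
by rewrite (@tp_uniq w z s) //; apply/and3P; split.
Qed.

Lemma tree_path_edge z x : x != z ->
  tree_path e (tpred z e x) x = [:: tpred z e x; x].
Proof.
move=> xz; rewrite /tpred /tree_path.
have := tp_def x z; case E: (xget [::] (fun s => is_tpath e x z s)) => [|w s].
  by rewrite /is_tpath /= (negbTE xz).
rewrite /is_tpath => /and3P[/andP[exw _] _ _] /=.
case: He => sym irr _.
rewrite (@tp_uniq w x [:: x]) // /is_tpath /= sym exw eqxx /= andbT inE.
apply/negP => /eqP wx; subst w; by rewrite irr in exw.
Qed.

End Tree.

Section Ana.
Variable R : realType.
Variable M : finType.

Lemma powRK (x p : R) : 0 <= x -> 0 < p -> (x `^ p) `^ p^-1 = x.
Proof. by move=> x0 p0; rewrite -powRrM mulfV ?gt_eqF // powRr1. Qed.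

Lemma powRK' (x p : R) : 0 <= x -> 0 < p -> (x `^ p^-1) `^ p = x.
Proof. by move=> x0 p0; rewrite -powRrM mulVf ?gt_eqF // powRr1. Qed.

Lemma pnorm0 (p : R) (Y : pBanach p) : pB_norm (0 : pB_car Y) = 0.
Proof. by have := @pB_hom R p Y 0 0; rewrite scale0r normr0 mul0r. Qed.

Lemma pnormN (p : R) (Y : pBanach p) (x y : pB_car Y) :
  pB_norm (x - y) = pB_norm (y - x).
Proof.
have -> : x - y = (-1) *: (y - x) by rewrite scaleN1r opprB.
by rewrite (@pB_hom R p Y) normrN normr1 mul1r.
Qed.

Lemma psum (p : R) (Y : pBanach p) (I : finType) (P : pred I) (v : I -> pB_car Y) :
  0 < p -> pB_norm (\sum_(i | P i) v i) `^ p <= \sum_(i | P i) pB_norm (v i) `^ p.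
Proof.
move=> p0.
apply: (big_ind2 (fun a c => pB_norm a `^ p <= c)).
- by rewrite pnorm0 powR0 ?gt_eqF.
- move=> x1 x2 y1 y2 h1 h2; apply: le_trans (pB_ptri _ _) _; exact: lerD.
- by [].
Qed.

Definition Y0 (p : R) : pBanach p.
refine (@PBanach R p ('rV[R]_0 : lmodType R) (fun _ => 0) _ _ _ _ _).
- by move=> _.
- by move=> x _; rewrite thinmx0.
- by move=> c x; rewrite mulr0.
- by move=> x y; rewrite lerDl powR_ge0.
- move=> u _; exists 0 => eps e0; exists 0%N => n _; exact: e0.
Defined.


Implicit Types (X : {set M}) (rho : M -> M -> R) (z : M) (b : M -> R) (p r : R).

Definition Fset (p : R) (X : {set M}) (rho : M -> M -> R) (z : M) (b : M -> R) :=
  (fun r : R => exists (Y : pBanach p) (f : M -> pB_car Y),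
        [/\ f z = 0,
            forall x y, x \in X -> y \in X -> pB_norm (f x - f y) <= rho x y &
            r = pB_norm (\sum_(x in X) b x *: f x)]).

Lemma FnormE p X rho z b : Fnorm p X rho z b = sup (Fset p X rho z b).
Proof. by []. Qed.

Lemma Fset0 p X rho z b : (forall x y, x \in X -> y \in X -> 0 <= rho x y) ->
  Fset p X rho z b 0.
Proof.
move=> h; exists (Y0 p), (fun _ => 0); split.
- by [].
- move=> x y xX yX; exact: (h x y xX yX).
- reflexivity.
Qed.

Lemma Fset_ub p X rho z b r : 0 < p -> z \in X -> Fset p X rho z b r ->
  r <= (\sum_(x in X) (`|b x| * rho x z) `^ p) `^ p^-1.
Proof.
move=> p0 zX [Y [f [fz Lf ->]]].
rewrite -(@powRK (pB_norm _) p) ?pB_ge0 //.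
apply: ge0_ler_powR.
- by rewrite invr_ge0 ltW.
- by rewrite nnegrE powR_ge0.
- by rewrite nnegrE sumr_ge0 // => i _; rewrite powR_ge0.
apply: le_trans (psum _ _ p0) _.
apply: ler_sum => x xX.
rewrite pB_hom.
have r0 : 0 <= rho x z by apply: le_trans (pB_ge0 (f x - f z)) (Lf _ _ xX zX).
apply: ge0_ler_powR.
- by rewrite ltW.
- by rewrite nnegrE mulr_ge0 ?pB_ge0.
- by rewrite nnegrE mulr_ge0.
- by rewrite ler_wpM2l // -[f x]subr0 -fz Lf.
Qed.

Lemma Fset_has_ub p X rho z b : 0 < p -> z \in X -> has_ubound (Fset p X rho z b).
Proof.
move=> p0 zX; exists ((\sum_(x in X) (`|b x| * rho x z) `^ p) `^ p^-1) => r Hr.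
exact: Fset_ub Hr.
Qed.

Lemma Fnorm_ge0 p X rho z b : 0 < p -> z \in X ->
  (forall x y, x \in X -> y \in X -> 0 <= rho x y) -> 0 <= Fnorm p X rho z b.
Proof.
move=> p0 zX h; rewrite FnormE; apply: ub_le_sup; first exact: Fset_has_ub.
exact: Fset0.
Qed.

Lemma Fnorm_mono p X (rho1 rho2 : M -> M -> R) z b : 0 < p -> z \in X ->
  (forall x y, x \in X -> y \in X -> 0 <= rho1 x y) ->
  (forall x y, x \in X -> y \in X -> rho1 x y <= rho2 x y) ->
  Fnorm p X rho1 z b <= Fnorm p X rho2 z b.
Proof.
move=> p0 zX h0 h12; rewrite !FnormE; apply: ge_sup.
  by exists 0; exact: Fset0.
move=> r [Y [f [fz Lf ->]]]; apply: ub_le_sup; first exact: Fset_has_ub.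
exists Y, f; split => // x y xX yX; exact: le_trans (Lf _ _ xX yX) (h12 _ _ xX yX).
Qed.

End Ana.

Section Main.
Variable R : realType.
Variable M : finType.
Variable e : rel M.
Hypothesis He : is_tree e.

Lemma sum_path_ge (q : R) (d : M -> M -> R) u s : is_qmetric q d -> 0 < q ->
  d u (last u s) `^ q <= \sum_(pr <- zip (u :: s) s) d pr.1 pr.2 `^ q.
Proof.
case=> d0 dxx dsym dtri q0.
elim: s u => [|w s IH] u /=.
  by rewrite big_nil (dxx u u).2 // powR0 ?gt_eqF.
rewrite big_cons /=; apply: le_trans (dtri u w _) _.
by rewrite lerD2l; exact: IH.
Qed.

Lemma dT_ge (q : R) (d : M -> M -> R) u v : is_qmetric q d -> 0 < q ->
  d u v <= dT q d e u v.
Proof.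
move=> hd q0; rewrite /dT /=.
have d0 : forall x y, 0 <= d x y by case: hd.
rewrite -(@powRK _ (d u v) q) ?d0 //.
apply: ge0_ler_powR.
- by rewrite invr_ge0 ltW.
- by rewrite nnegrE powR_ge0.
- by rewrite nnegrE sumr_ge0 // => i _; rewrite powR_ge0.
have /and3P[_ /eqP hl _] := tp_def He u v.
have := @sum_path_ge q d u (xget [::] (fun s => is_tpath e u v s)) hd q0.
by rewrite hl.
Qed.

Lemma dT_edge (q : R) (d : M -> M -> R) z x : is_qmetric q d -> 0 < q -> x != z ->
  dT q d e (tpred z e x) x = d (tpred z e x) x.
Proof.
move=> hd q0 xz; rewrite /dT tree_path_edge // /= big_cons big_nil addr0.
by rewrite powRK //; case: hd.
Qed.

Variable z : M.
Variable p : R.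
Variable Y : pBanach p.
Variable f : M -> pB_car Y.
Hypothesis fz : f z = 0.

Lemma tele n y : (size (tree_path e y z) <= n)%N ->
  \sum_(x | (x != z) && inV z e x y) (f x - f (tpred z e x)) = f y.
Proof.
elim: n y => [|n IH] y hs; first by rewrite /tree_path in hs.
case: (eqVneq y z) => [->|yz].
  by rewrite big_pred0 ?fz // => x; rewrite /inV (tree_path_zz He) inE andNb.
have U : uniq (tree_path e y z) by have /and3P[] := tp_def He y z.
rewrite (tree_path_cons He yz) /= in U hs.
case/andP: U => ynP _.
rewrite (bigD1 y) /=; last by rewrite yz /inV (tree_path_cons He yz) mem_head.
rewrite (eq_bigl (fun x => (x != z) && inV z e x (tpred z e y))); last first.
  move=> x; rewrite /inV (tree_path_cons He yz) inE.
  case: (eqVneq x y) => [->|xy] /=.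
    by rewrite andbF (negbTE ynP) andbF.
  by rewrite andbT.
by rewrite IH ?subrK.
Qed.

Lemma telesum (b : M -> R) :
  \sum_(x in [set: M]%SET) b x *: f x =
  \sum_(x | x != z) (\sum_(y | inV z e x y) b y) *: (f x - f (tpred z e x)).
Proof.
under [RHS]eq_bigr do rewrite scaler_suml.
rewrite (exchange_big_dep xpredT) //=.
apply: eq_big => [x|y _]; first by rewrite inE.
by rewrite -scaler_sumr (tele (leqnn _)).
Qed.

Lemma tele_bound (b : M -> R) (rho : M -> M -> R) : 0 < p ->
  (forall x y, pB_norm (f x - f y) <= rho x y) ->
  pB_norm (\sum_(x in [set: M]%SET) b x *: f x) <= Tsum p z e rho b.
Proof.
move=> p0 Lf.
rewrite /Tsum -(@powRK _ (pB_norm _) p) ?pB_ge0 //.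
apply: ge0_ler_powR.
- by rewrite invr_ge0 ltW.
- by rewrite nnegrE powR_ge0.
- by rewrite nnegrE sumr_ge0 // => i _; rewrite powR_ge0.
rewrite telesum; apply: le_trans (psum _ _ p0) _.
apply: ler_sum => x _.
rewrite pB_hom.
apply: ge0_ler_powR.
- by rewrite ltW.
- by rewrite nnegrE mulr_ge0 ?pB_ge0.
- by rewrite nnegrE normr_ge0.
rewrite normrM ler_wpM2l //.
by rewrite pnormN (le_trans (Lf _ _)) ?ler_norm.
Qed.

End Main.

Lemma Fnorm_T_le (R : realType) (M : finType) (e : rel M) (He : is_tree e)
  (p : R) z (b : M -> R) (rho : M -> M -> R) : 0 < p -> (forall x y, 0 <= rho x y) ->
  Fnorm p [set: M]%SET rho z b <= Tsum p z e rho b.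
Proof.
move=> p0 r0; rewrite FnormE; apply: ge_sup.
  by exists 0; apply: Fset0 => x y _ _; exact: r0.
move=> r [Y [f [fz Lf ->]]].
apply: (tele_bound He fz b p0) => x y; apply: Lf; by rewrite inE.
Qed.

Unset Implicit Arguments.
Set Strict Implicit.

Theorem lemma3p12 (R : realType) (p q : R) (M : finType) (d : M -> M -> R)
  (z : M) (N : {set M}) (a : M -> R) (e : rel M) :
  0 < p -> p <= q -> q <= 1 -> is_qmetric q d -> z \in N -> is_tree e ->
  let b := ext0 N z a in
  let dt := dT q d e in
  [/\ Tsum p z e dt b = Tsum p z e d b,
      Fnorm p N dt z b >= Fnorm p N d z b &
      (Tsum p z e d b = 1 -> Fnorm p [set: M] d z b = 1 ->
       amen p N d z = (Fnorm p N d z b)%:E ->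
       (amen p N d z <= (Fnorm p N dt z b / Tsum p z e dt b)%:E
        <= amen p N dt z)%E)].
Proof.
move=> p0 pq q1 hd zN He b dt.
have q0 : 0 < q by apply: lt_le_trans pq.
have d0 : forall x y, 0 <= d x y by case: hd.
have dt0 : forall x y, 0 <= dt x y by move=> x y; exact: powR_ge0.
have T1 : Tsum p z e dt b = Tsum p z e d b.
  rewrite /Tsum; congr (_ `^ _); apply: eq_bigr => x xz.
  by rewrite /dt dT_edge.
have F2 : Fnorm p N d z b <= Fnorm p N dt z b.
  apply: Fnorm_mono; [exact: p0 | exact: zN | move=> x y _ _; exact: d0 |].
  move=> x y _ _; rewrite /dt; exact: dT_ge.
split; [exact: T1 | exact: F2 | move=> Td FM amenE].
have Tdt1 : Tsum p z e dt b = 1 by rewrite T1.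
rewrite Tdt1 divr1 amenE lee_fin F2 /=.
have F0 : 0 <= Fnorm p N dt z b by apply: Fnorm_ge0 => // x y _ _; exact: dt0.
have G0 : 0 <= Fnorm p [set: M]%SET dt z b.
  by apply: Fnorm_ge0 => //; rewrite inE.
have G1 : Fnorm p [set: M]%SET dt z b <= 1.
  by rewrite -Tdt1; apply: Fnorm_T_le.
case: (eqVneq (Fnorm p N dt z b) 0) => [->|Fn0].
  by rewrite /amen; apply: ereal_sup_ubound; left.
have bsupp : forall x, (x \notin N) || (x == z) -> b x = 0.
  move=> x; rewrite /b /ext0; case: ifP => [/andP[xN xz]|_ _]; last reflexivity.
  by rewrite xN (negbTE xz).
have Gp : 0 < Fnorm p [set: M]%SET dt z b -> ((Fnorm p N dt z b)%:E <= (Fnorm p N dt z b / Fnorm p [set: M]%SET dt z b)%:E)%E.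
  move=> Gp; rewrite lee_fin (ler_pdivlMr _ _ Gp); exact: ler_piMr F0 G1.
rewrite /amen.
case: (eqVneq (Fnorm p [set: M]%SET dt z b) 0) => [GG|Gn0].
  apply: le_trans (leey _) _; apply: ereal_sup_ubound; right; exists b.
  split; [exact: bsupp | split; [exact: Fn0 | rewrite GG eqxx; reflexivity]].
have Gpos : 0 < Fnorm p [set: M]%SET dt z b by rewrite lt_def Gn0 G0.
apply: le_trans (Gp Gpos) _; apply: ereal_sup_ubound; right; exists b.
split; [exact: bsupp | split; [exact: Fn0 | rewrite (negbTE Gn0); reflexivity]].
Qed.
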